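(* Let $n>k\geq3$ be odd integers, let $A$ be a cyclically $k$-diagonal $n\times n$ array and let $g=\gcd(n,k-1)$. If $\gcd(g+1,k-1)=2$, then there exists a solution to $P(A)$.
   Context: Arrays are partially filled and toroidal; $F(A)$ is the set of filled cells. $s_R(i,j)=(i,j+t)$, $s_C(i,j)=(i+t,j)$ with $t\ge1$ minimal such that the cell is filled. For $R\in\{-1,1\}^n$, $C\in\{-1,1\}^n$, $CN_{RC}(i,j)=s_C^{c_{j'}}(i,j')$ where $(i,j')=s_R^{r_i}(i,j)$. A solution to $P(A)$ is a pair $R,C$ such that $CN_{RC}$ is a permutation of $F(A)$ forming a single cycle of length $|F(A)|$. An $n\times n$ array is cyclically $k$-diagonal if its filled cells are exactly the $(i,j)$ with $i-j\bmod n\in\{0,\dots,k-1\}$. *)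

(* Defs.v *)
From mathcomp Require Import all_boot.
Set Implicit Arguments. Unset Strict Implicit. Unset Printing Implicit Defensive.

(* Cells of an n x n toroidal array are pairs (i,j) : 'I_n * 'I_n (row, column).
   A partially filled array A is represented by its set of filled cells F(A). *)
Definition cell n := ('I_n * 'I_n)%type.

(* step P f x = f^t x, where t >= 1 is minimal with P (f^t x)
   (searched among t = 1..n; f will be a cyclic shift of 'I_n). *)
Definition step n (P : pred 'I_n) (f : 'I_n -> 'I_n) (x : 'I_n) : 'I_n :=
  iter (find (fun t => P (iter t f x)) (iota 1 n)).+1 f x.

(* Signs in {-1,1} are encoded as booleans: true = +1, false = -1. *)
Definition shift n (s : bool) : 'I_n -> 'I_n := if s then @ordS n else @ord_pred n.

Definition sR n (F : {set cell n}) (s : bool) (c : cell n) : cell n :=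
  (c.1, step (fun j => (c.1, j) \in F) (@shift n s) c.2).

Definition sC n (F : {set cell n}) (s : bool) (c : cell n) : cell n :=
  (step (fun i => (i, c.2) \in F) (@shift n s) c.1, c.2).

Definition CN n (F : {set cell n}) (R C : 'I_n -> bool) (c : cell n) : cell n :=
  let c' := sR F (R c.1) c in sC F (C c'.2) c'.

(* (R,C) is a solution to P(A): CN_{RC} is a permutation of F(A) consisting of a
   single cycle of length |F(A)|, i.e. it maps F(A) into F(A), is injective on
   F(A), and every filled cell is reached from every filled cell by iteration. *)
Definition is_solution n (F : {set cell n}) (R C : 'I_n -> bool) : Prop :=
  [/\ {in F, forall c, CN F R C c \in F},
      {in F &, injective (CN F R C)} &
      {in F &, forall c d, exists m, iter m (CN F R C) c = d}].

(* Cyclically k-diagonal n x n array: filled cells are (i,j) with (i - j mod n) in {0..k-1}. *)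
Definition cyc_diag n k : {set cell n} :=
  [set c : cell n | (c.1 + (n - c.2)) %% n < k].

(* Main.v *)
Require Import Defs.
From mathcomp Require Import all_boot zify.
Set Implicit Arguments. Unset Strict Implicit. Unset Printing Implicit Defensive.

Section Period.
Variables (X : finType) (P : {pred X}) (f : X -> X).
Hypothesis fP : {in P, forall x, f x \in P}.
Hypothesis finj : {in P &, injective f}.

Lemma iterP m x : x \in P -> iter m f x \in P.
Proof. by move=> xP; elim: m => //= m IH; apply: fP. Qed.

Lemma iter_cancel i y z : y \in P -> z \in P -> iter i f y = iter i f z -> y = z.
Proof.
elim: i y z => //= i IH y z yP zP e; apply: IH => //.
by apply: finj => //; apply: iterP.
Qed.

Lemma period x : x \in P -> exists2 p, 0 < p & iter p f x = x.
Proof.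
move=> xP.
pose F := fun i : 'I_(#|X|.+1) => iter i f x.
have: ~~ injectiveb F.
  apply/negP => /injectiveP inj; have := leq_card F inj.
  by rewrite card_ord ltnn.
case/injectivePn => i [j ij eF].
wlog lt_ij : i j ij eF / i < j.
  move=> W; case: (ltngtP i j) => h; first exact: (W i j).
  - by apply: (W j i) => //; rewrite eq_sym.
  - by move: ij; rewrite (val_inj h) eqxx.
exists (j - i); first by rewrite subn_gt0.
apply: (@iter_cancel i) => //; first by apply: iterP.
by rewrite -iterD subnKC ?(ltnW lt_ij) //; move: eF; rewrite /F => ->.
Qed.
End Period.

Lemma mod_small2 x m : x < m + m -> x %% m = if x < m then x else x - m.
Proof.
move=> h; case: ifP => h2; first by rewrite modn_small.
have e : x = (x - m) + m by lia.
by rewrite {1}e modnDr modn_small; lia.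
Qed.

Section Dyn.
Variables n k g : nat.
Hypothesis k3 : 3 <= k.
Hypothesis kn : k < n.
Hypothesis kodd : odd k.
Hypothesis g0 : 0 < g.
Hypothesis gk : g.+1 <= k.-1.

Definition colL j := if j == 0 then n.-1 else j.-1.
Definition jump j := if j + k.-1 < n then j + k.-1 else j + k.-1 - n.
Definition Tm (x : nat * nat) : nat * nat :=
  let j' := if x.2 == k.-1 then jump x.1 else colL x.1 in
  (j', if j' <= g then (x.2 + 2) %% k else x.2).
Definition valid (x : nat * nat) := (x.1 < n) && (x.2 < k).
Definition reach x y := exists m, iter m Tm x = y.

Lemma reach_refl x : reach x x. Proof. by exists 0. Qed.
Lemma reach_trans x y z : reach x y -> reach y z -> reach x z.
Proof. by move=> [a <-] [b <-]; exists (b + a); rewrite iterD. Qed.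
Lemma reach_step x y : reach (Tm x) y -> reach x y.
Proof. by move=> [a <-]; exists a.+1; rewrite iterSr. Qed.

Lemma colL_lt j : j < n -> colL j < n.
Proof. by rewrite /colL; case: eqP; lia. Qed.
Lemma jump_lt j : j < n -> jump j < n.
Proof. by rewrite /jump; case: ifP; lia. Qed.
Lemma jumpE j : j < n -> jump j = (j + k.-1) %% n.
Proof.
move=> jn; rewrite /jump; case: ifP => h; first by rewrite modn_small.
have e : j + k.-1 = (j + k.-1 - n) + n by lia.
by rewrite {2}e modnDr modn_small; lia.
Qed.

Lemma Tm_valid x : valid x -> valid (Tm x).
Proof.
case: x => j d /andP [/= jn dk]; apply/andP; split => /=.
  by case: eqP => _; [apply: jump_lt | apply: colL_lt].
by case: ifP => // _; rewrite ltn_mod; lia.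
Qed.

Lemma mod2k d : d < k -> (d + 2) %% k = if d + 2 < k then d + 2 else d + 2 - k.
Proof.
move=> dk; case: ifP => h; first by rewrite modn_small.
have e : d + 2 = (d + 2 - k) + k by lia.
by rewrite {1}e modnDr modn_small; lia.
Qed.

Lemma Tm_inj x y : valid x -> valid y -> Tm x = Tm y -> x = y.
Proof.
case: x => j d; case: y => j' d' /andP [/= jn dk] /andP [/= jn' dk'].
rewrite /Tm /= => [[ej ed]].
have edd : d = d'.
  move: ed; rewrite ej; case: ifP => // _.
  by rewrite !mod2k //; do 2 case: ifP; lia.
subst d'; congr pair; move: ej; case: eqP => _.
  by rewrite /jump; do 2 case: ifP; lia.
by rewrite /colL; do 2 case: eqP; lia.
Qed.



Lemma kE : k = (k./2).*2.+1.
Proof. by rewrite -[in LHS](odd_double_half k) kodd add1n. Qed.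

Definition pm1 p := if p == 0 then g else p.-1.

Lemma walk_out d : forall j, g < j < n -> d != k.-1 -> reach (j,d) (g.+1,d).
Proof.
move=> j; elim: j => [|j IH] /andP [gj jn] dk; first by lia.
case: (eqVneq j g) => [->|jg]; first exact: reach_refl.
apply: reach_step; rewrite /Tm /= (negbTE dk) /colL /=.
have -> : (j <= g) = false by lia.
apply: IH => //; lia.
Qed.

Lemma Sstep p d : p <= g -> d < k -> d != k.-1 ->
  reach (p,d) (pm1 p, (d + 2) %% k).
Proof.
move=> pg dk dk1; apply: reach_step; rewrite /Tm /= (negbTE dk1) /colL /pm1.
case: (eqVneq p 0) => [pe|p0] /=.
  have -> : (n.-1 <= g) = false by lia.
  apply: reach_trans (walk_out (j := n.-1) _ dk1) _; first by lia.
  apply: reach_step; rewrite /Tm /= (negbTE dk1) /colL /=.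
  by rewrite leqnn; exact: reach_refl.
have -> : (p.-1 <= g) = true by lia.
exact: reach_refl.
Qed.

Lemma pm1_le p : p <= g -> pm1 p <= g.
Proof. by rewrite /pm1; case: eqP; lia. Qed.

Lemma walk a : a < k -> forall p d, p <= g -> d < k -> (d + 2 * a) %% k = k.-1 ->
  reach (p,d) (iter a pm1 p, k.-1).
Proof.
elim: a => [|a IH] ak p d pg dk.
  by rewrite muln0 addn0 modn_small // => ->; exact: reach_refl.
move=> e.
have dk1 : d != k.-1.
  apply/eqP => ed; move: e; rewrite ed.
  have kk := kE.
  rewrite (_ : k.-1 + 2 * a.+1 = (2 * a + 1) + k); last by lia.
  rewrite modnDr mod_small2; last by lia.
  by case: ifP; lia.
apply: reach_trans (Sstep pg dk dk1) _.
rewrite iterSr; apply: IH; first by lia.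
- exact: pm1_le.
- by rewrite ltn_mod; lia.
- by rewrite modnDml (_ : d + 2 + 2 * a = d + 2 * a.+1) //; lia.
Qed.


Lemma iter_jump m j : j < n -> iter m jump j = (j + m * k.-1) %% n.
Proof.
move=> jn; elim: m => [|m IH]; first by rewrite mul0n addn0 modn_small.
rewrite iterS IH jumpE; last by rewrite ltn_mod; lia.
by rewrite modnDml mulSn; congr (_ %% _); lia.
Qed.

Lemma iter_jump_lt m j : j < n -> iter m jump j < n.
Proof. by move=> jn; rewrite iter_jump // ltn_mod; lia. Qed.

Lemma chain m : forall j, j < n -> (forall i, 0 < i <= m -> g < iter i jump j) ->
  iter m.+1 jump j <= g -> reach (j, k.-1) (iter m.+1 jump j, 1).
Proof.
elim: m => [|m IH] j jn hi hl; apply: reach_step; rewrite /Tm /= eqxx.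
  rewrite /= in hl; rewrite hl (_ : k.-1 + 2 = 1 + k); last by lia.
  by rewrite modnDr modn_small; [exact: reach_refl | lia].
have := hi 1 isT; rewrite /= => hj; rewrite leqNgt hj /=.
rewrite (_ : jump (jump (iter m jump j)) = iter m.+1 jump (jump j)); last by rewrite -iterSr.
apply: IH; first exact: jump_lt.
  by move=> i /andP [i0 im]; rewrite -iterSr; apply: hi; lia.
by rewrite -iterSr.
Qed.


Hypothesis nodd : odd n.
Hypothesis gE : g = gcdn n k.-1.
Hypothesis hg : gcdn g.+1 k.-1 = 2.

Definition NN := n %/ g.
Definition qq := k.-1 %/ g.
Lemma nE : n = NN * g.
Proof. by rewrite /NN divnK // gE dvdn_gcdl. Qed.
Lemma qE : k.-1 = qq * g.
Proof. by rewrite /qq divnK // gE dvdn_gcdr. Qed.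
Lemma copNq : coprime NN qq.
Proof.
apply/eqP; apply/eqP; rewrite -(eqn_pmul2l g0) muln1 muln_gcdr.
by rewrite ![g * _]mulnC -nE -qE -gE.
Qed.
Lemma NN1 : 1 < NN.
Proof.
have := nE; case: NN => [|[|N]] //=; lia.
Qed.

Lemma bez : exists2 a, 0 < a < NN & NN %| 1 + a * qq.
Proof.
have N0 : 0 < NN by have := NN1; lia.
case: (Bezoutl qq N0) => a aN; rewrite (eqP copNq) => d.
exists a => //; rewrite aN andbT lt0n; apply/negP => /eqP a0.
by move: d; rewrite a0 mul0n addn0 dvdn1 => /eqP N1; have := NN1; lia.
Qed.

Lemma land_ex j : j < n -> exists M, iter M.+1 jump j <= g.
Proof.
move=> jn; case: bez => a /andP [a0 aN] /dvdnP [z hz].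
pose c := j %/ g.
exists (a * c + NN).-1; rewrite prednK; last by have := NN1; lia.
rewrite iter_jump // (divn_eq j g) qE.
have -> : j %/ g * g + j %% g + (a * c + NN) * (qq * g) =
          j %% g + (c * z + qq) * n.
  rewrite nE /c; nia.
rewrite addnC modnMDl modn_small; last by have := ltn_pmod j g0; lia.
by have := ltn_pmod j g0; lia.
Qed.


Lemma land j : j < n -> exists m,
  [/\ forall i, 0 < i <= m -> g < iter i jump j, iter m.+1 jump j <= g &
      forall m', iter m'.+1 jump j <= g -> m <= m'].
Proof.
move=> jn; pose P := fun M => iter M.+1 jump j <= g.
have ex : exists M, P M by exact: land_ex.
case: (ex_minnP ex) => m hm mmin; exists m; split => //.
move=> i /andP [i0 im]; rewrite ltnNge; apply/negP => hi.
have := mmin i.-1; rewrite /P prednK // => /(_ hi); lia.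
Qed.

Lemma land_mod M j : j < n -> iter M jump j %% g = j %% g.
Proof.
move=> jn; rewrite iter_jump // modn_dvdm; last by rewrite nE dvdn_mull.
by rewrite qE mulnA addnC modnMDl.
Qed.

Lemma land_s s m : 0 < s < g -> iter m.+1 jump s <= g -> iter m.+1 jump s = s.
Proof.
move=> /andP [s0 sg] hl; have := land_mod m.+1 (j := s); rewrite (modn_small sg).
have sn : s < n by lia.
move=> /(_ sn); case: (ltngtP (iter m.+1 jump s) g) => h.
- by rewrite modn_small.
- by lia.
- by rewrite h modnn; lia.
Qed.

Lemma land_g m : (forall m', iter m'.+1 jump g <= g -> m <= m') ->
  iter m.+1 jump g <= g -> iter m.+1 jump g = 0.
Proof.
move=> mmin hl.
have gn : g < n by lia.
have hm := land_mod m.+1 gn; rewrite modnn in hm.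
case: bez => a /andP [a0 aN] /dvdnP [z hz].
have ha : iter a.-1.+1 jump g = 0.
  rewrite prednK // iter_jump // qE.
  rewrite (_ : g + a * (qq * g) = z * n); first by rewrite modnMl.
  rewrite nE; nia.
have ma : m <= a.-1 by apply: mmin; rewrite ha.
case: (ltngtP (iter m.+1 jump g) g) => h.
- by move: hm; rewrite modn_small.
- by lia.
exfalso; move: h; rewrite iter_jump // => /eqP.
rewrite -{2}(modn_small gn) -{2}[g]addn0 eqn_modDl mod0n -/(dvdn _ _).
rewrite nE qE mulnA dvdn_pmul2r // Gauss_dvdl ?copNq // => /dvdn_leq.
by move=> /(_ isT); lia.
Qed.


Lemma from_jump j : j < n -> exists2 s, s <= g & reach (j, k.-1) (s, 1).
Proof.
move=> jn; case: (land jn) => m [hi hl _].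
by exists (iter m.+1 jump j) => //; apply: chain.
Qed.

Definition w := iter k.-1 pm1.

Lemma walk1 s : s <= g -> reach (s, 1) (w s, k.-1).
Proof.
move=> sg; apply: walk => //; try lia.
by rewrite (_ : 1 + 2 * k.-1 = k.-1 + k); [rewrite modnDr modn_small | ]; lia.
Qed.

Lemma pi_s s : 0 < s < g -> reach (s, k.-1) (w s, k.-1).
Proof.
move=> hs; have sn : s < n by lia.
case: (land sn) => m [hi hl _].
apply: reach_trans (chain sn hi hl) _.
rewrite land_s //; apply: walk1; lia.
Qed.

Lemma pi_g : reach (g, k.-1) (w 0, k.-1).
Proof.
have gn : g < n by lia.
case: (land gn) => m [hi hl mmin].
apply: reach_trans (chain gn hi hl) _.
rewrite land_g //; apply: walk1; lia.
Qed.

Lemma exists_a d : d < k -> exists2 a, a < k & (d + 2 * a) %% k = k.-1.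
Proof.
move=> dk; exists (((k.-1 - d) * (k./2).+1) %% k); first by rewrite ltn_mod; lia.
rewrite -modnDmr modnMmr modnDmr.
have kk := kE.
rewrite (_ : d + 2 * ((k.-1 - d) * (k./2).+1) = (k.-1 - d) * k + k.-1).
  by rewrite modnMDl modn_small; lia.
nia.
Qed.

Lemma to_sigma x : valid x -> exists2 p, p <= g & reach x (p, k.-1).
Proof.
case: x => j d /andP [/= jn dk].
case: (eqVneq d k.-1) => [->|dk1].
  case: (leqP j g) => jg; first by exists j => //; exact: reach_refl.
  case: (from_jump jn) => s sg r; exists (w s); first by rewrite /w; elim: (k.-1) => //= i IH; exact: pm1_le.
  exact: reach_trans r (walk1 sg).
have H p e : p <= g -> e < k -> exists2 p', p' <= g & reach (p, e) (p', k.-1).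
  move=> pg ek; case: (exists_a ek) => a ak ha.
  exists (iter a pm1 p); last exact: walk.
  by elim: a {ak ha} => //= a IH; exact: pm1_le.
case: (leqP j g) => jg; first exact: H.
have r1 : reach (j, d) (g.+1, d) by apply: walk_out; lia.
have r2 : reach (g.+1, d) (g, (d + 2) %% k).
  apply: reach_step; rewrite /Tm /= (negbTE dk1) /colL /= leqnn; exact: reach_refl.
case: (H g ((d + 2) %% k)) => //; first by rewrite ltn_mod; lia.
move=> p' pg r3; exists p' => //; exact: reach_trans r1 (reach_trans r2 r3).
Qed.


Lemma godd : odd g.
Proof. by apply: (dvdn_odd _ nodd); rewrite gE dvdn_gcdl. Qed.
Lemma kev : odd k.-1 = false.
Proof. by rewrite {1}kE /= odd_double. Qed.

Lemma pm1E y : y <= g -> pm1 y = (y + g) %% g.+1.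
Proof.
move=> yg; rewrite /pm1; case: eqP => [->|y0].
  by rewrite add0n modn_small.
rewrite (_ : y + g = y.-1 + g.+1); last by lia.
by rewrite modnDr modn_small; lia.
Qed.

Lemma iter_pm1 c p : p <= g -> iter c pm1 p = (p + c * g) %% g.+1.
Proof.
move=> pg; elim: c => [|c IH]; first by rewrite mul0n addn0 modn_small.
rewrite iterS IH pm1E; last by have := ltn_pmod (p + c * g) (ltn0Sn g); lia.
by rewrite modnDml mulSn; congr (_ %% _); lia.
Qed.

Lemma w_le s : s <= g -> w s <= g.
Proof. by rewrite /w; elim: (k.-1) => //= i IH sg; apply: pm1_le; apply: IH. Qed.

Lemma iter_w a s : s <= g -> iter a w s = (s + a * (k.-1 * g)) %% g.+1.
Proof.
move=> sg; elim: a => [|a IH]; first by rewrite mul0n addn0 modn_small.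
rewrite iterS {1}/w iter_pm1; last by rewrite IH; have := ltn_pmod (s + a * (k.-1 * g)) (ltn0Sn g); lia.
by rewrite IH modnDml mulSn; congr (_ %% _); lia.
Qed.

Lemma w_odd a s : s <= g -> odd (iter a w s) = odd s.
Proof.
move=> sg; rewrite iter_w // odd_mod; last by rewrite /= godd.
by rewrite oddD !oddM kev /= andbF addbF.
Qed.

Lemma w_hit s t : s <= g -> t <= g -> odd s = odd t -> exists a, iter a w s = t.
Proof.
move=> sg tg pst.
have ev : ~~ odd g.+1 by rewrite /= godd.
pose h1 := g.+1 %/ 2; pose r1 := k.-1 %/ 2.
have hE : g.+1 = 2 * h1 by rewrite mulnC divnK // dvdn2.
have rE : k.-1 = 2 * r1 by rewrite mulnC divnK // dvdn2 kev.
have cop : gcdn h1 r1 = 1.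
  apply/eqP; rewrite -(eqn_pmul2l (isT : 0 < 2)) muln1 muln_gcdr -hE -rE hg //.
have h10 : 0 < h1 by lia.
case: (Bezoutl r1 h10) => b _; rewrite cop => /dvdnP [z hz].
pose c := (t + g.+1 - s)./2.
have cE : c.*2 = t + g.+1 - s.
  have := odd_double_half (t + g.+1 - s); rewrite oddB; last by lia.
  rewrite oddD /= godd pst; case: (odd t) => /=; rewrite -/c; lia.
exists (b * c); rewrite iter_w //.
have tl : t < g.+1 by lia.
apply/eqP; rewrite -(modn_small tl).
rewrite -(eqn_modDr (c * 2 * g)).
have -> : s + b * c * (k.-1 * g) + c * 2 * g = s + (c * g * z) * g.+1.
  rewrite rE hE; nia.
have -> : t + c * 2 * g = s + (t + g - s) * g.+1.
  move: cE; rewrite -muln2; nia.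
by rewrite ![s + _]addnC !modnMDl.
Qed.


Lemma walkw s : s <= g -> forall a, (forall b, b < a -> 0 < iter b w s < g) ->
  reach (s, k.-1) (iter a w s, k.-1).
Proof.
move=> sg; elim=> [|a IH] hb; first exact: reach_refl.
apply: reach_trans (IH _) _; first by move=> b ba; apply: hb; lia.
rewrite iterS; apply: pi_s; apply: hb; lia.
Qed.

Lemma iter_w_le a s : s <= g -> iter a w s <= g.
Proof. by move=> sg; elim: a => //= a IH; apply: w_le. Qed.

Lemma hitT s t : s <= g -> (t == 0) || (t == g) -> odd s = odd t ->
  reach (s, k.-1) (t, k.-1).
Proof.
move=> sg ht pst.
pose P := fun a => (iter a w s == 0) || (iter a w s == g).
have ex : exists a, P a.
  case: (w_hit sg _ pst) => [|a ha]; first by case/orP: ht => /eqP ->.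
  by exists a; rewrite /P ha.
case: (ex_minnP ex) => m hm mmin.
have -> : t = iter m w s.
  have := w_odd m sg; rewrite pst; have := godd.
  by case/orP: hm => /eqP ->; case/orP: ht => /eqP ->; rewrite //= => ->.
apply: walkw => // b bm; have := iter_w_le b sg.
have nP : ~~ P b by apply/negP => /mmin; lia.
move: nP; rewrite /P negb_or => /andP [/eqP h0 /eqP h1] hle; apply/andP; split; lia.
Qed.

Lemma to0 s : s <= g -> reach (s, k.-1) (0, k.-1).
Proof.
move=> sg; case: (boolP (odd s)) => os.
  apply: reach_trans (hitT (t := g) sg _ _) _; [by rewrite eqxx orbT | by rewrite os godd | ].
  apply: reach_trans pi_g _.
  apply: hitT; [exact: w_le | by [] | exact: (w_odd 1 (leq0n g))].
by apply: hitT => //; rewrite (negbTE os).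
Qed.

Lemma reach_all x : valid x -> reach x (0, k.-1).
Proof.
move=> vx; case: (to_sigma vx) => p pg r.
exact: reach_trans r (to0 pg).
Qed.

End Dyn.

Lemma find_iota (p : pred nat) N : forall m t0, m <= t0 < m + N -> p t0 ->
  (forall t, m <= t < t0 -> ~~ p t) -> find p (iota m N) = t0 - m.
Proof.
elim: N => [|N IH] m t0 h pt hb; first by lia.
rewrite /=; case: ifP => pm.
  case: (eqVneq t0 m) => [->|ne]; first by rewrite subnn.
  by have := hb m; rewrite pm; lia.
case: (eqVneq t0 m) => [e|ne]; first by move: pm; rewrite -e pt.
rewrite (IH m.+1 t0) //; try lia.
by move=> t ht; apply: hb; lia.
Qed.

Section Cells.
Variables n' k : nat.
Local Notation n := n'.+1.
Hypothesis k3 : 3 <= k.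
Hypothesis kn : k < n.

Lemma step_spec (P : pred 'I_n) f x t0 : 0 < t0 <= n -> P (iter t0 f x) ->
  (forall t, 0 < t < t0 -> ~~ P (iter t f x)) -> step P f x = iter t0 f x.
Proof.
move=> ht pt hb; rewrite /step (@find_iota _ n 1 t0).
- by rewrite subn1 prednK //; lia.
- lia.
- exact: pt.
- by move=> t ht'; apply: hb; lia.
Qed.

Lemma val_pred (y : 'I_n) : nat_of_ord (@ord_pred n y) = if y == 0 :> nat then n' else y.-1.
Proof.
rewrite /=; case: eqP => [->|y0]; first by rewrite add0n /= modn_small.
have yn := ltn_ord y.
rewrite (_ : (y + n).-1 = y.-1 + n); last by lia.
by rewrite modnDr modn_small; lia.
Qed.

Lemma val_S (y : 'I_n) : nat_of_ord (@ordS n y) = if y.+1 == n then 0 else y.+1.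
Proof.
rewrite /=; case: eqP => [->|y0]; first by rewrite modnn.
by rewrite modn_small //; have := ltn_ord y; lia.
Qed.

Lemma val_iter_pred t (y : 'I_n) : t <= n ->
  nat_of_ord (iter t (@ord_pred n) y) = if t <= y then y - t else y + n - t.
Proof.
have yn := ltn_ord y.
elim: t => [|t IH] ht; first by rewrite subn0.
rewrite iterS val_pred IH; last by lia.
by case: (leqP t y) => h1; case: (leqP t.+1 y) => h2; case: eqP => h3; lia.
Qed.

Lemma val_iter_S t (y : 'I_n) : t <= n ->
  nat_of_ord (iter t (@ordS n) y) = if y + t < n then y + t else y + t - n.
Proof.
have yn := ltn_ord y.
elim: t => [|t IH] ht; first by rewrite addn0 yn.
rewrite iterS val_S IH; last by lia.
by case: (ltnP (y + t) n) => h1; case: (ltnP (y + t.+1) n) => h2; case: eqP => h3; lia.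
Qed.

Definition F := cyc_diag n k.

Lemma memF (a b : 'I_n) :
  ((a, b) \in F) = ((if b <= a then a - b else a + n - b) < k).
Proof.
rewrite /F /cyc_diag inE /=; have := ltn_ord a; have := ltn_ord b => bn an.
by rewrite mod_small2; [case: (leqP b a) => h1; case: ifP => h2; lia | lia].
Qed.

Definition addm j d := if j + d < n then j + d else j + d - n.
Definition enc (x : nat * nat) : cell n := (inord (addm x.1 x.2), inord x.1).

Lemma addm_lt j d : j < n -> d < n -> addm j d < n.
Proof. by rewrite /addm; case: ifP; lia. Qed.

Lemma enc1 x : x.1 < n -> x.2 < k -> nat_of_ord (enc x).1 = addm x.1 x.2.
Proof. by move=> h1 h2; rewrite /= inordK // ltnS -ltnS; apply: addm_lt; lia. Qed.
Lemma enc2 x : x.1 < n -> nat_of_ord (enc x).2 = x.1.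
Proof. by move=> h1; rewrite /= inordK. Qed.


Lemma memF' (a b : 'I_n) :
  ((a, b) \in F) = ((b <= a) && (a - b < k) || (a < b) && (a + n - b < k)).
Proof. by rewrite memF; case: (leqP b a) => h /=; lia. Qed.

Lemma cell_eq (c d : cell n) : nat_of_ord c.1 = d.1 -> nat_of_ord c.2 = d.2 -> c = d.
Proof. by case: c d => [a b] [a' b'] /= /val_inj -> /val_inj ->. Qed.

Lemma inordE j : j < n -> nat_of_ord (inord j : 'I_n) = j.
Proof. by move=> h; rewrite /= inordK. Qed.

Lemma addm_spec j d : (j + d < n /\ addm j d = j + d) \/ (n <= j + d /\ addm j d = j + d - n).
Proof. by rewrite /addm; case: ifP => h; [left | right]; split => //; lia. Qed.
Lemma colL_spec j : (j = 0 /\ colL n j = n') \/ (0 < j /\ colL n j = j.-1).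
Proof. by rewrite /colL; case: eqP => h; [left | right]; split => //; lia. Qed.
Lemma jump_spec j : (j + k.-1 < n /\ jump n k j = j + k.-1) \/ (n <= j + k.-1 /\ jump n k j = j + k.-1 - n).
Proof. by rewrite /jump; case: ifP => h; [left | right]; split => //; lia. Qed.

Ltac elim_ops := repeat match goal with
 | |- context [colL _ ?x] => case: (colL_spec x) => [[? ->]|[? ->]]
 | |- context [jump _ _ ?x] => case: (jump_spec x) => [[? ->]|[? ->]]
 | |- context [addm ?x ?y] => case: (addm_spec x y) => [[? ->]|[? ->]]
 end.
Ltac arith := rewrite /=; elim_ops; repeat (case: ifP => ?); lia.

Lemma R1 j d : j < n -> d < k.-1 ->
  sR F false (enc (j, d)) = enc (colL n j, d.+1).
Proof.
move=> jn dk; rewrite /sR /shift (@step_spec _ _ _ 1) //.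
- by apply: cell_eq; rewrite ?val_iter_pred ?enc1 ?enc2 //; arith.
- rewrite memF' ?val_iter_pred ?enc1 ?enc2 //; arith.
- lia.
Qed.


Lemma R2 j : j < n -> sR F false (enc (j, k.-1)) = enc (jump n k j, 0).
Proof.
move=> jn; rewrite /sR /shift (@step_spec _ _ _ (n - k.-1)).
- by apply: cell_eq; rewrite ?val_iter_pred ?enc1 ?enc2 //; try lia; arith.
- lia.
- rewrite memF' ?val_iter_pred ?enc1 ?enc2 //; try lia; arith.
- move=> t ht; rewrite memF' ?val_iter_pred ?enc1 ?enc2 //; try lia; arith.
Qed.

Lemma C1 j e : j < n -> 0 < e < k -> sC F false (enc (j, e)) = enc (j, e.-1).
Proof.
move=> jn ek; rewrite /sC /shift (@step_spec _ _ _ 1).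
- by apply: cell_eq; rewrite ?val_iter_pred ?enc1 ?enc2 //; try lia; arith.
- lia.
- rewrite memF' ?val_iter_pred ?enc1 ?enc2 //; try lia; arith.
- lia.
Qed.

Lemma C2 j : j < n -> sC F false (enc (j, 0)) = enc (j, k.-1).
Proof.
move=> jn; rewrite /sC /shift (@step_spec _ _ _ (n - k.-1)).
- by apply: cell_eq; rewrite ?val_iter_pred ?enc1 ?enc2 //; try lia; arith.
- lia.
- rewrite memF' ?val_iter_pred ?enc1 ?enc2 //; try lia; arith.
- move=> t ht; rewrite memF' ?val_iter_pred ?enc1 ?enc2 //; try lia; arith.
Qed.

Lemma C3 j e : j < n -> e < k.-1 -> sC F true (enc (j, e)) = enc (j, e.+1).
Proof.
move=> jn ek; rewrite /sC /shift (@step_spec _ _ _ 1).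
- by apply: cell_eq; rewrite ?val_iter_S ?enc1 ?enc2 //; try lia; arith.
- lia.
- rewrite memF' ?val_iter_S ?enc1 ?enc2 //; try lia; arith.
- lia.
Qed.

Lemma C4 j : j < n -> sC F true (enc (j, k.-1)) = enc (j, 0).
Proof.
move=> jn; rewrite /sC /shift (@step_spec _ _ _ (n - k.-1)).
- by apply: cell_eq; rewrite ?val_iter_S ?enc1 ?enc2 //; try lia; arith.
- lia.
- rewrite memF' ?val_iter_S ?enc1 ?enc2 //; try lia; arith.
- move=> t ht; rewrite memF' ?val_iter_S ?enc1 ?enc2 //; try lia; arith.
Qed.


Variable g : nat.
Definition Rs : 'I_n -> bool := fun _ => false.
Definition Cs : 'I_n -> bool := fun j => (j : nat) <= g.

Lemma CN_enc j d : j < n -> d < k -> CN F Rs Cs (enc (j, d)) = enc (Tm n k g (j, d)).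
Proof.
move=> jn dk.
have -> : CN F Rs Cs (enc (j, d)) =
  sC F (Cs (sR F false (enc (j, d))).2) (sR F false (enc (j, d))) by [].
change (Tm n k g (j, d)) with
  (if d == k.-1 then jump n k j else colL n j,
   if (if d == k.-1 then jump n k j else colL n j) <= g then (d + 2) %% k else d).
case: (eqVneq d k.-1) => [->|dk1].
  have jl : jump n k j < n by rewrite /jump; case: ifP; lia.
  rewrite R2 // /Cs enc2 //.
  case: ifP => hg.
    rewrite C3 //; last by lia.
    have -> : (k.-1 + 2) %% k = 1.
      rewrite (_ : k.-1 + 2 = 1 + k); last by lia.
      by rewrite modnDr modn_small; lia.
    by [].
  by rewrite C2.
have jl : colL n j < n by rewrite /colL; case: ifP; lia.
rewrite R1 //; last by lia.
rewrite /Cs enc2 //; case: ifP => hg.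
  case: (ltnP d.+1 k.-1) => h.
    rewrite C3 //; have -> : (d + 2) %% k = d.+2 by rewrite modn_small; lia.
    by [].
  have -> : d.+1 = k.-1 by lia.
  have -> : (d + 2) %% k = 0 by rewrite (_ : d + 2 = k) ?modnn; lia.
  by rewrite C4.
by rewrite C1 //; lia.
Qed.

Lemma enc_in x : x.1 < n -> x.2 < k -> enc x \in F.
Proof. by move=> h1 h2; rewrite memF' enc1 ?enc2 //; arith. Qed.

Lemma enc_inj x y : x.1 < n -> x.2 < k -> y.1 < n -> y.2 < k -> enc x = enc y -> x = y.
Proof.
case: x => a b; case: y => a' b' /= h1 h2 h3 h4 e.
have e1 := congr1 (fun c : cell n => nat_of_ord c.1) e.
have e2 := congr1 (fun c : cell n => nat_of_ord c.2) e.
move: e1 e2; cbv beta; rewrite !enc1 ?enc2 // /= => e1 e2.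
rewrite -e2 in e1 *; congr pair; move: e1; elim_ops; lia.
Qed.

Lemma enc_surj c : c \in F -> exists x, [/\ x.1 < n, x.2 < k & c = enc x].
Proof.
case: c => a0 b0 cF.
exists (nat_of_ord b0, if b0 <= a0 then a0 - b0 else a0 + n - b0).
have := ltn_ord a0; have := ltn_ord b0; move: cF; rewrite memF' => cF h2 h1.
have hk : (if b0 <= a0 then a0 - b0 else a0 + n - b0) < k.
  by case: ifP; lia.
split => //; apply: esym; apply: cell_eq; rewrite ?enc1 ?enc2 //.
by rewrite /=; case: (leqP b0 a0) => hh; elim_ops; lia.
Qed.

End Cells.

Theorem proposition5p1 (n k : nat) :
  odd n -> odd k -> 3 <= k -> k < n ->
  gcdn (gcdn n (k - 1)).+1 (k - 1) = 2 ->
  exists R C : 'I_n -> bool, is_solution (cyc_diag n k) R C.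
Proof.
move=> nodd kodd k3 kn; rewrite subn1 => hg.
case: n nodd kn hg => [|n'] nodd kn hg; first by lia.
set g := gcdn n'.+1 k.-1 in hg.
have gE : g = gcdn n'.+1 k.-1 by [].
have g0 : 0 < g by rewrite gE gcdn_gt0.
have gk : g < k.-1.
  have gd : g %| k.-1 by rewrite gE dvdn_gcdr.
  have gle : g <= k.-1 by apply: dvdn_leq => //; lia.
  have godd : odd g by apply: (dvdn_odd _ nodd); rewrite gE dvdn_gcdl.
  have kev : odd k.-1 = false.
    by move: kodd; case: (k) k3 => // k' _ /=; case: (odd k').
  rewrite ltn_neqAle gle andbT; apply/negP => /eqP e.
  by move: godd; rewrite e kev.
exists (Rs (n':=n')), (@Cs n' g).
have TV := Tm_valid k3 kn kodd g0 gk.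
have Eq x : valid n'.+1 k x -> forall m,
    iter m (CN (F n' k) (Rs (n':=n')) (@Cs n' g)) (enc n' x) = enc n' (iter m (Tm n'.+1 k g) x).
  move=> vx; elim=> [|m IH] //=; rewrite IH.
  have : valid n'.+1 k (iter m (Tm n'.+1 k g) x).
    by elim: m {IH} => //= m IHm; apply: TV.
  by case: (iter m _ x) => j d /andP [/= jn dk]; rewrite CN_enc.
have mapF : {in F n' k, forall c, CN (F n' k) (Rs (n':=n')) (@Cs n' g) c \in F n' k}.
  move=> c /(enc_surj k3 kn) [[j d] [/= jn dk ->]].
  rewrite CN_enc //; have /andP [h1 h2] := TV (j, d) (introT andP (conj jn dk)).
  exact: enc_in.
have injF : {in F n' k &, injective (CN (F n' k) (Rs (n':=n')) (@Cs n' g))}.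
  move=> c c' /(enc_surj k3 kn) [[j d] [/= jn dk ->]] /(enc_surj k3 kn) [[j' d'] [/= jn' dk' ->]].
  rewrite !CN_enc // => e.
  have /andP [h1 h2] := TV (j, d) (introT andP (conj jn dk)).
  have /andP [h1' h2'] := TV (j', d') (introT andP (conj jn' dk')).
  have := enc_inj k3 kn h1 h2 h1' h2' e.
  move=> /(Tm_inj k3 kn kodd g0 gk) -> //; by apply/andP.
split => // c c' cF c'F.
have [[j d] [/= jn dk ec]] := enc_surj k3 kn cF.
have [[j' d'] [/= jn' dk' ec']] := enc_surj k3 kn c'F.
have vx : valid n'.+1 k (j, d) by apply/andP.
have vy : valid n'.+1 k (j', d') by apply/andP.
have [a ha] := reach_all k3 kn kodd g0 gk nodd gE hg vx.
have [b hb] := reach_all k3 kn kodd g0 gk nodd gE hg vy.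
have [p p0 hp] := period mapF injF c'F.
exists ((p * b - b) + a).
rewrite iterD ec Eq // ha -hb -Eq // -ec' -iterD subnK; last by rewrite leq_pmull.
elim: (b) => [|b' IH]; first by rewrite muln0.
by rewrite mulnS iterD IH hp.
Qed.
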